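(* Assume in addition that $\mathbb{X}_f$ contains an open neighborhood of the origin and that $\mathbb{X}$ is compact. Suppose there is a class $\mathcal{K}_\infty$ function $\alpha$ such that, for every $N\in\{0,1,\ldots,M\}$, $V^0_N(x)\le\alpha(|x|)$ for all $x\in\mathbb{X}_f$. Then there is a class $\mathcal{K}_\infty$ function $\beta$ such that $V(x)\le\beta(|x|)$ for all $x\in\mathbb{X}$.
   Context: Consider the discrete-time controlled system $x^+=f(x,u)$ with state $x\in\mathbb{R}^{n}$ and control $u\in\mathbb{R}^{m}$, constraint sets $\mathbb{X}\subset\mathbb{R}^n$, $\mathbb{U}\subset\mathbb{R}^m$, $\mathbb{Y}\subset\mathbb{R}^p$, and a constraint function $h(x,u)\in\mathbb{R}^p$. A control $u$ is feasible at $x\in\mathbb{X}$ if $u\in\mathbb{U}$, $f(x,u)\in\mathbb{X}$ and $h(x,u)\in\mathbb{Y}$. A control sequence $(u(0),\ldots,u(N-1))$ is feasible from $x$ if, for the state sequence defined by $x(0)=x$ and $x(k+1)=f(x(k),u(k))$, each $u(k)$ is feasible at $x(k)$. We are given a stage cost $l(x,u)$, a terminal set $\mathbb{X}_f$ and a terminal cost $V_f$ defined on $\mathbb{X}_f$. Horizon-$N$ problem at $x$: minimize $\sum_{k=0}^{N-1}l(x(k),u(k))+V_f(x(N))$ over control sequences that are feasible from $x$ and satisfy $x(N)\in\mathbb{X}_f$. Let $V_N^0(x)$ be its minimum value, which is assumed to be attained whenever the feasible set is nonempty. For $N=0$, $V_0^0(x)=V_f(x)$ for $x\in\mathbb{X}_f$.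 Standing assumptions: (A1) $f,l,h,V_f$ are continuous on an open set containing $\mathbb{X}\times\mathbb{U}$ (for $V_f$, an open set containing $\mathbb{X}_f$). The stage cost $l$ is nonnegative definite in $(x,u)$ and positive definite in $u$. $V_f$ is positive definite on $\mathbb{X}_f$. Moreover $f(0,0)=0$, $l(0,0)=0$ and $V_f(0)=0$. (A2) $\mathbb{X}$ and $\mathbb{X}_f$ are closed, $\mathbb{X}_f\subset\mathbb{X}$, $\mathbb{U}$ is compact, and $\mathbb{X},\mathbb{X}_f,\mathbb{U}$ each contain a neighborhood of the origin. (A3) For every $x\in\mathbb{X}_f$ there is a control $u$ feasible at $x$ with $f(x,u)\in\mathbb{X}_f$ and $l(x,u)+V_f(f(x,u))\le V_f(x)$. (A4) For every $x\in\mathbb{X}$ there exist an integer $N\ge0$ and a feasible control sequence of length $N$ from $x$ whose state sequence satisfies $x(N)\in\mathbb{X}_f$. For $x\in\mathbb{X}$, $N(x)$ denotes the minimum such $N$. (A5) There is an integer $M\ge 0$ with $N(x)\le M$ for all $x\in\mathbb{X}$. (A6) There are class $\mathcal{K}_\infty$ functions $\alpha_1,\alpha_2$ with $l(x,u)\ge\alpha_1(|x|)$ for all $x\in\mathbb{X}$, $u\in\mathbb{U}$, and $V_f(x)\le\alpha_2(|x|)$ for all $x\in\mathbb{X}_f$. Define $V(x)=V^0_{N(x)}(x)$ for $x\in\mathbb{X}$. *)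

(* Defs.v *)
From HB Require Import structures.
From mathcomp Require Import all_boot all_order all_algebra.
From mathcomp Require Import all_classical all_reals all_analysis.
Set Implicit Arguments. Unset Strict Implicit. Unset Printing Implicit Defensive.
Import Order.TTheory GRing.Theory Num.Theory.
Import numFieldNormedType.Exports.
Local Open Scope classical_set_scope.
Local Open Scope ring_scope.

Section MPC.
Variables (R : realType) (n m p : nat).
Notation X_t := 'rV[R]_n.
Notation U_t := 'rV[R]_m.
Notation Y_t := 'rV[R]_p.

Definition classKinf (a : R -> R) : Prop :=
  a 0 = 0 /\
  {within `[0, +oo[, continuous a} /\
  {in `[0, +oo[ &, forall r s, r < s -> a r < a s} /\
  (forall B : R, exists r : R, 0 <= r /\ B < a r).

Variables (f : X_t -> U_t -> X_t) (h : X_t -> U_t -> Y_t)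
  (l : X_t -> U_t -> R) (Vf : X_t -> R)
  (X Xf : set X_t) (U : set U_t) (Y : set Y_t).

Definition feasible_ctrl (x : X_t) (u : U_t) : Prop :=
  U u /\ X (f x u) /\ Y (h x u).

Fixpoint traj (x : X_t) (us : nat -> U_t) (k : nat) : X_t :=
  match k with
  | 0 => x
  | k'.+1 => f (traj x us k') (us k')
  end.

(* control sequence (u(0),...,u(N-1)) (values of us beyond N-1 are irrelevant) *)
Definition feasible_seq (N : nat) (x : X_t) (us : nat -> U_t) : Prop :=
  forall k, (k < N)%N -> feasible_ctrl (traj x us k) (us k).

Definition admissible (N : nat) (x : X_t) (us : nat -> U_t) : Prop :=
  feasible_seq N x us /\ Xf (traj x us N).

Definition cost (N : nat) (x : X_t) (us : nat -> U_t) : R :=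
  \sum_(k < N) l (traj x us k) (us k) + Vf (traj x us N).

(* optimal value V_N^0(x) (the minimum, when attained, is the infimum) *)
Definition VN0 (N : nat) (x : X_t) : R :=
  inf [set cost N x us | us in admissible N x].

Definition min_attained : Prop :=
  forall N x, (exists us, admissible N x us) ->
    exists2 us, admissible N x us &
      forall vs, admissible N x vs -> cost N x us <= cost N x vs.

(* N(x): the least N for which an admissible sequence exists (0 if none) *)
Definition Nmin (x : X_t) : nat :=
  match pselect (exists N, (fun N => `[< exists us, admissible N x us >]) N) with
  | left pf => ex_minn pf
  | right _ => 0%N
  end.

Definition Vfun (x : X_t) : R := VN0 (Nmin x) x.

Definition A1 : Prop :=
  (exists O : set (X_t * U_t), open O /\ X `*` U `<=` O /\
     forall q, O q ->
       {for q, continuous (fun r : X_t * U_t => f r.1 r.2)} /\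
       {for q, continuous (fun r : X_t * U_t => h r.1 r.2)} /\
       {for q, continuous (fun r : X_t * U_t => l r.1 r.2)}) /\
  (exists O : set X_t, open O /\ Xf `<=` O /\
     forall x, O x -> {for x, continuous Vf}) /\
  (forall x u, X x -> U u -> 0 <= l x u) /\
  (forall x u, X x -> U u -> u != 0 -> 0 < l x u) /\
  (forall x, Xf x -> x != 0 -> 0 < Vf x) /\
  f 0 0 = 0 /\ l 0 0 = 0 /\ Vf 0 = 0.

Definition A2 : Prop :=
  closed X /\ closed Xf /\ Xf `<=` X /\ compact U /\
  nbhs (0 : X_t) X /\ nbhs (0 : X_t) Xf /\ nbhs (0 : U_t) U.

Definition A3 : Prop :=
  forall x, Xf x -> exists u, feasible_ctrl x u /\ Xf (f x u) /\
    l x u + Vf (f x u) <= Vf x.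

Definition A4 : Prop :=
  forall x, X x -> exists N us, admissible N x us.

Definition A5 (M : nat) : Prop :=
  forall x, X x -> (Nmin x <= M)%N.

Definition A6 : Prop :=
  exists a1 a2, classKinf a1 /\ classKinf a2 /\
    (forall x u, X x -> U u -> a1 `|x| <= l x u) /\
    (forall x, Xf x -> Vf x <= a2 `|x|).

End MPC.

(* Main.v *)
Require Import Defs.
From HB Require Import structures.
From mathcomp Require Import all_boot all_order all_algebra.
From mathcomp Require Import all_classical all_reals all_analysis.
Import Order.TTheory GRing.Theory Num.Theory.
Import numFieldNormedType.Exports.
Local Open Scope classical_set_scope.
Local Open Scope ring_scope.

Lemma cpt_bnd (K : realType) (V : normedModType K) (A : set V) :
  compact A -> exists B, 0 <= B /\ forall x, A x -> `|x| <= B.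
Proof.
move=> /compact_bounded [M [Mr HM]].
exists (`|M| + 1); split; first by rewrite addr_ge0.
move=> x Ax; apply: (HM (`|M| + 1)) => //.
by rewrite (le_lt_trans (real_ler_norm Mr)) // ltrDl.
Qed.

Lemma Kinf_ge0 (R : realType) (a : R -> R) : classKinf a ->
  forall s, 0 <= s -> 0 <= a s.
Proof.
move=> [a0 [_ [inc _]]] s s0; rewrite -a0.
have [->|sp] := eqVneq s 0; first by [].
apply/ltW/inc => //; rewrite ?in_itv /= ?andbT ?lexx //.
by rewrite lt_neqAle eq_sym sp.
Qed.

Lemma Kinf_le (R : realType) (a : R -> R) : classKinf a ->
  forall r s, 0 <= r -> r <= s -> a r <= a s.
Proof.
move=> [a0 [_ [inc _]]] r s r0 rs.
have [->|rs'] := eqVneq r s; first by [].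
apply/ltW/inc; rewrite ?in_itv /= ?andbT //; first exact: le_trans rs.
by rewrite lt_neqAle rs' rs.
Qed.

Arguments Kinf_ge0 {R a}.
Arguments Kinf_le {R a}.

Theorem proposition3 (R : realType) (n m p : nat)
  (f : 'rV[R]_n -> 'rV[R]_m -> 'rV[R]_n) (h : 'rV[R]_n -> 'rV[R]_m -> 'rV[R]_p)
  (l : 'rV[R]_n -> 'rV[R]_m -> R) (Vf : 'rV[R]_n -> R)
  (X Xf : set 'rV[R]_n) (U : set 'rV[R]_m) (Y : set 'rV[R]_p) (M : nat) :
  A1 f h l Vf X Xf U ->
  A2 X Xf U ->
  A3 f h l Vf X Xf U Y ->
  A4 f h X Xf U Y ->
  A5 f h X Xf U Y M ->
  A6 l Vf X Xf U ->
  min_attained f h l Vf X Xf U Y ->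
  (exists O : set 'rV[R]_n, open O /\ O 0 /\ O `<=` Xf) ->
  compact X ->
  (exists alpha : R -> R, classKinf alpha /\
     forall N : nat, (N <= M)%N ->
       forall x, Xf x -> VN0 f h l Vf X Xf U Y N x <= alpha `|x|) ->
  exists beta : R -> R, classKinf beta /\
    forall x, X x -> Vfun f h l Vf X Xf U Y x <= beta `|x|.
Proof.
move=> [ [Q1 [oQ1 [XUQ1 cQ1]]] [_ [lge0 [_ [Vfpos [_ [_ Vf0]]]]]]].
move=> [_ [_ [XfX [cU _]]]] _ HA4 HA5 [a1 [a2 [_ [Ka2 [_ Vfle]]]]] _.
move=> [Ob [oO [Ob0 ObXf]]] cX [alpha [Ka Halpha]].
have [L [L0 HL]] : exists L, 0 <= L /\ forall x u, X x -> U u -> l x u <= L.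
  have cl : compact ((fun r : 'rV[R]_n * 'rV[R]_m => l r.1 r.2) @` (X `*` U)).
    apply: continuous_compact; last exact: compact_setX.
    apply: continuous_in_subspaceT => q /set_mem Hq.
    by have [_ [_ ?]] := cQ1 q (XUQ1 q Hq).
  have [L [L0 HL]] := cpt_bnd _ _ _ cl.
  exists L; split => // x u Xx Uu.
  apply: le_trans (HL (l x u) _); first exact: ler_norm.
  by exists (x, u).
have [KX [KX0 HKX]] := cpt_bnd _ _ _ cX.
set B := M%:R * L + a2 KX.
have B0 : 0 <= B.
  apply: addr_ge0; [apply: mulr_ge0 => // | exact: (Kinf_ge0 Ka2 KX KX0)].
have Nspec : forall x, X x -> (exists us, admissible f h X Xf U Y (Nmin f h X Xf U Y x) x us)
   /\ (forall N, (exists us, admissible f h X Xf U Y N x us) -> (Nmin f h X Xf U Y x <= N)%N).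
  move=> x Xx; rewrite /Nmin; case: pselect => [pf|np]; last first.
    by exfalso; apply: np; have [N HN] := HA4 x Xx; exists N; apply/asboolP.
  case: ex_minnP => N /asboolP HN Hmin; split => // N' HN'.
  by apply: Hmin; apply/asboolP.
have trX : forall x vs N, X x -> feasible_seq f h X U Y N x vs ->
    forall k, (k <= N)%N -> X (traj f x vs k).
  move=> x vs N Xx Hf; elim=> [|k IH] // kN.
  by have [_ [? _]] := Hf k kN.
have costge0 : forall x vs N, X x -> admissible f h X Xf U Y N x vs ->
    0 <= cost f l Vf N x vs.
  move=> x vs N Xx [Hf HX]; rewrite /cost; apply: addr_ge0.
    apply: sumr_ge0 => k _; apply: lge0; first by apply: (trX _ _ N) => //; apply: ltnW.
    by have [? _] := Hf k (ltn_ord k).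
  have [->|nz] := eqVneq (traj f x vs N) 0; first by rewrite Vf0.
  exact/ltW/Vfpos.
have infle : forall x vs N, X x -> admissible f h X Xf U Y N x vs ->
    VN0 f h l Vf X Xf U Y N x <= cost f l Vf N x vs.
  move=> x vs N Xx Had; apply: ge_inf; last by exists vs.
  by exists 0 => _ [ws Hws <-]; apply: costge0 Hws.
have VB : forall x, X x -> Vfun f h l Vf X Xf U Y x <= B.
  move=> x Xx; have [[us Hus] _] := Nspec x Xx.
  have := HA5 x Xx; rewrite /Vfun.
  move: (Nmin _ _ _ _ _ _ x) Hus => N Had NM.
  apply: le_trans (infle _ _ _ Xx Had) _.
  case: Had => Hf HX; rewrite /cost; apply: lerD.
    apply: (@le_trans _ _ (\sum_(k < N) L)).
      apply: ler_sum => k _; apply: HL.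
        by apply: (trX _ _ N) => //; apply: ltnW.
      by have [? _] := Hf k (ltn_ord k).
    rewrite sumr_const card_ord -[L *+ N]mulr_natl.
    by apply: ler_wpM2r => //; rewrite ler_nat.
  apply: le_trans (Vfle _ HX) _; apply: (Kinf_le Ka2) => //.
  by apply: HKX; apply: XfX.
have Valpha : forall x, Xf x -> Vfun f h l Vf X Xf U Y x <= alpha `|x|.
  move=> x Xfx; have Xx := XfX x Xfx.
  have [_ Hmin] := Nspec x Xx.
  have N0 : Nmin f h X Xf U Y x = 0%N.
    apply/eqP; rewrite -leqn0; apply: Hmin; exists (fun _ => 0); split => //.
  by rewrite /Vfun N0; apply: Halpha.
have /nbhs_ballP [r r0 Hr] : nbhs (0 : 'rV[R]_n) Ob by apply: open_nbhs_nbhs; split.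
have rle : forall x, ~ Xf x -> r <= `|x|.
  move=> x nXf; rewrite leNgt; apply/negP => H; apply: nXf; apply: ObXf; apply: Hr.
  by rewrite -ball_normE /ball_ /= sub0r normrN.
have Bpos : 0 <= B / r by rewrite divr_ge0 // ltW.
exists (fun s => alpha s + B / r * s); split.
  have [a0 [acont [ainc aunb]]] := Ka.
  split; first by rewrite a0 mulr0 addr0.
  split.
    have lc : continuous (fun s : R => B / r * s) by move=> y; apply: cvgMr; apply: cvg_id.
    have H2 : {within `[0, +oo[, continuous (fun s : R => B / r * s)}.
      exact: continuous_subspaceT.
    move=> x; apply: cvgD; first exact: acont.
    exact: H2.
  split.
    move=> s t Hs Ht st; apply: ltr_leD; first exact: ainc.
    by apply: ler_wpM2l => //; apply: ltW.
  move=> C; have [s [s0 Hs]] := aunb C; exists s; split => //.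
  by apply: (lt_le_trans Hs); rewrite lerDl mulr_ge0.
move=> x Xx; have [Xfx|nXf] := pselect (Xf x).
  by apply: le_trans (Valpha x Xfx) _; rewrite lerDl mulr_ge0.
apply: le_trans (VB x Xx) _.
apply: (@le_trans _ _ (B / r * `|x|)); last by rewrite lerDr (Kinf_ge0 Ka).
rewrite -{1}(mulr1 B) -{1}(divff (lt0r_neq0 r0)) mulrA.
by rewrite mulrAC; apply: ler_wpM2l => //; apply: rle.
Qed.
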